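(* Let $t\ge 2$, let $n_1,\dots,n_t$ be positive integers, and let $G=K_{n_1,\dots,n_t}$ be the complete $t$-partite graph with partite sets $V_1,\dots,V_t$, $|V_i|=n_i$. Let $N_t=\{1,\dots,t\}$ and $f(I)=\sum_{i\in I}n_i$ for $I\subseteq N_t$. Let $p$ be a positive integer with $f(N_t)>p$. Then for every optimal $\gamma_p(G)$-set $D$ and all $i,j\in N_t\setminus I_D$, we have $\big||D_i|-|D_j|\big|\le 1$.
   Context: A set $S\subseteq V(G)$ is a $p$-dominating set of $G$ if every vertex $v\in V(G)\setminus S$ has at least $p$ neighbors in $S$. The $p$-domination number $\gamma_p(G)$ is the minimum cardinality of a $p$-dominating set of $G$, and a $\gamma_p(G)$-set is a $p$-dominating set of cardinality $\gamma_p(G)$. For $D\subseteq V(G)$ write $D_i=V_i\cap D$ for $i\in N_t$ and $I_D=\{i\in N_t: |D_i|=|V_i|\}$. For a $\gamma_p(G)$-set $D$ with $|I_D|<t$ define $$\mu(D)=\sum_{i\in N_t\setminus I_D}\left|\,|D_i|-\frac{|D|-f(I_D)}{t-|I_D|}\right|.$$ A $\gamma_p(G)$-set $D$ is optimal if: (1) $f(I_D)<p$; (2) $|I_D|\ge |I_S|$ for every $\gamma_p(G)$-set $S$; (3) $\mu(D)\le\mu(S)$ for every $\gamma_p(G)$-set $S$ with $I_S=I_D$. *)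

(* Defs.v *)
From mathcomp Require Import all_boot all_order all_algebra.
Set Implicit Arguments. Unset Strict Implicit. Unset Printing Implicit Defensive.
Import Order.TTheory GRing.Theory Num.Theory.

(* Complete t-partite graph K_{n_1,...,n_t}: parts indexed by 'I_t
   (standing for N_t = {1,...,t}); part i has n i vertices.
   A vertex is a dependent pair (i, k) with k : 'I_(n i). *)
Definition vtx (t : nat) (n : 'I_t -> nat) : finType := {i : 'I_t & 'I_(n i)}.

Definition adj t (n : 'I_t -> nat) (u v : vtx n) : bool := tag u != tag v.

Definition fsum t (n : 'I_t -> nat) (I : {set 'I_t}) : nat := \sum_(i in I) n i.

Definition pdom t (n : 'I_t -> nat) (p : nat) (S : {set vtx n}) : Prop :=
  forall v : vtx n, v \notin S -> p <= #|[set u in S | adj u v]|.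

Definition gamma_set t (n : 'I_t -> nat) (p : nat) (D : {set vtx n}) : Prop :=
  pdom p D /\ forall S : {set vtx n}, pdom p S -> #|D| <= #|S|.

Definition part t (n : 'I_t -> nat) (D : {set vtx n}) (i : 'I_t) : {set vtx n} :=
  [set v in D | tag v == i].

Definition IDset t (n : 'I_t -> nat) (D : {set vtx n}) : {set 'I_t} :=
  [set i | #|part D i| == n i].

Definition mu t (n : 'I_t -> nat) (D : {set vtx n}) : rat :=
  \sum_(i | i \notin IDset D)
    `| (#|part D i|)%:R - ((#|D|)%:R - (fsum n (IDset D))%:R) / (t - #|IDset D|)%:R |.

Definition optimal t (n : 'I_t -> nat) (p : nat) (D : {set vtx n}) : Prop :=
  [/\ gamma_set p D, #|IDset D| < t,
      fsum n (IDset D) < p,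
      (forall S, gamma_set (n:=n) p S -> #|IDset (n:=n) S| <= #|IDset D|)
    & (forall S, gamma_set (n:=n) p S -> IDset (n:=n) S = IDset D -> (mu D <= mu (n:=n) S)%R)].

(* Main.v *)
Require Import Defs.
From mathcomp Require Import all_boot all_order all_algebra zify.
Import Order.TTheory GRing.Theory Num.Theory.
From mathcomp Require Import lra.

Lemma card_tag t (n : 'I_t -> nat) (k : 'I_t) :
  #|[set v : vtx n | tag v == k]| = n k.
Proof.
have -> : [set v : vtx n | tag v == k] =
  [set (Tagged (fun i => 'I_(n i)) x : vtx n) | x in 'I_(n k)].
  apply/setP => v; rewrite inE; apply/eqP/imsetP.
    by case: v => i x /= Hi; subst i; exists x.
  by case=> x _ ->.
rewrite card_imset ?card_ord //.
move=> x y H; exact: eq_from_Tagged H.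
Qed.

Lemma part_sub t (n : 'I_t -> nat) (D : {set vtx n}) k : part D k \subset D.
Proof. by apply/subsetP => v; rewrite inE => /andP[]. Qed.

Lemma part_le t (n : 'I_t -> nat) (D : {set vtx n}) k : #|part D k| <= n k.
Proof.
rewrite -card_tag; apply: subset_leq_card; apply/subsetP => v.
by rewrite !inE => /andP[].
Qed.

Lemma not_full t (n : 'I_t -> nat) (D : {set vtx n}) k :
  #|part D k| != n k -> exists w : vtx n, tag w = k /\ w \notin D.
Proof.
move=> H.
case: (boolP [exists w : vtx n, (tag w == k) && (w \notin D)]).
  by case/existsP => w /andP[/eqP ? ?]; exists w.
rewrite negb_exists => /forallP H2.
have E : part D k = [set v : vtx n | tag v == k].
  apply/setP => v; rewrite !inE; move: (H2 v).
  by case: (v \in D); case: (tag v == k).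
by move: H; rewrite E card_tag eqxx.
Qed.

Lemma adj_card t (n : 'I_t -> nat) (S : {set vtx n}) v :
  #|[set u in S | adj u v]| = #|S| - #|part S (tag v)|.
Proof.
have -> : [set u in S | adj u v] = S :\: part S (tag v).
  apply/setP => u; rewrite !inE /adj; by case: (u \in S) => //=; rewrite andbT.
by rewrite cardsD (setIidPr (@part_sub _ _ _ _)).
Qed.

Lemma card_sum t (n : 'I_t -> nat) (D : {set vtx n}) :
  #|D| = \sum_k #|part D k|.
Proof.
rewrite -sum1_card (partition_big (fun v : vtx n => tag v) xpredT) //=.
apply: eq_bigr => k _; rewrite -sum1_card; apply: eq_bigl => v.
by rewrite !inE.
Qed.

Lemma ineq (a b m : rat): (b + 2 <= a -> b < m -> m < a ->
  `|a - 1 - m| + `|b + 1 - m| < `|a - m| + `|b - m|)%R.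
Proof.
move=> h1 h2 h3.
rewrite (gtr0_norm (x:=a-m)) ?subr_gt0 // (ltr0_norm (x:=b-m)) ?subr_lt0 //.
case: (lerP 0 (a-1-m)) => H1; [rewrite (ger0_norm H1)|rewrite (ltr0_norm H1)];
case: (lerP 0 (b+1-m)) => H2; [rewrite (ger0_norm H2)|rewrite (ltr0_norm H2)|rewrite (ger0_norm H2)|rewrite (ltr0_norm H2)]; lra.
Qed.

Lemma fin (x y z x' y' : rat) :
  (x' + y' < x + y -> x + (y + z) <= x' + (y' + z) -> False)%R.
Proof. move=> a b; lra. Qed.

Lemma ar1 (p D a b : nat) : p <= D - a -> b + 2 <= a -> p <= D - (b+1).
Proof. lia. Qed.
Lemma ar2 (p D a : nat) : p <= D - a -> p <= D - (a-1).
Proof. lia. Qed.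
Lemma ar3 (a b nn : nat) : b + 2 <= a -> a <= nn -> a - 1 = nn -> False.
Proof. lia. Qed.
Lemma ar4 (x y t : nat) : x + y = t -> y = t - x.
Proof. lia. Qed.
Lemma ar5 (a b : nat) : b + 2 <= a -> b.+1 <= a.
Proof. lia. Qed.

Lemma ar6 (a b : nat) : b + 2 <= a -> 1 <= a.
Proof. lia. Qed.

Lemma key t (n : 'I_t -> nat) p (D : {set vtx n}) k :
  pdom p D -> k \notin IDset D -> p <= #|D| - #|part D k|.
Proof.
move=> hd; rewrite inE => /not_full [w [tw wD]].
by have := hd w wD; rewrite adj_card tw.
Qed.

Lemma main t (n : 'I_t -> nat) (p : nat)
  (D : {set vtx n}) (hD : optimal p D) (i j : 'I_t) :
  i \notin IDset D -> j \notin IDset D -> #|part D j| + 2 <= #|part D i| -> False.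
Proof.
case: hD => hg hlt hfI hmax hmu.
set I := IDset D; set d := fun k => #|part D k|.
move=> iI jI hij.
case: (@arg_maxnP _ i (fun k => k \notin I) d iI) => i0 i0I Hi0.
case: (@arg_minnP _ j (fun k => k \notin I) d jI) => j0 j0I Hj0.
have hij0 : d j0 + 2 <= d i0.
  by have := Hi0 i iI; have := Hj0 j jI; rewrite /d in hij *; lia.
have ij0 : i0 != j0 by apply/eqP => E; move: hij0; rewrite E; lia.
have : 0 < #|part D i0| by rewrite /d in hij0; lia.
rewrite card_gt0 => /set0Pn [u]; rewrite inE => /andP [uD /eqP tu].
have [w [tw wD]] : exists w : vtx n, tag w = j0 /\ w \notin D.
  by apply: not_full; move: j0I; rewrite inE.
set S := w |: (D :\ u).
have uw : u != w by apply/eqP => E; move: wD; rewrite -E uD.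
have cardS : #|S| = #|D|.
  rewrite cardsU1 (cardsD1 u D) uD !inE (negbTE wD) andbF /=; lia.
have pk : forall k, k != i0 -> k != j0 -> part S k = part D k.
  move=> k ki kj; apply/setP => v; rewrite !inE.
  have [E|vk] := eqVneq (tag v) k; last by rewrite !andbF.
  have -> : (v == w) = false by apply/eqP => E'; move: kj; rewrite -E E' tw eqxx.
  have -> : (v != u) = true by apply/eqP => E'; move: ki; rewrite -E E' tu eqxx.
  by [].
have pi0 : #|part S i0| = d i0 - 1.
  have -> : part S i0 = part D i0 :\ u.
    apply/setP => v; rewrite !inE.
    have [E|vk] := eqVneq (tag v) i0; last by rewrite !andbF.
    have -> : (v == w) = false by apply/eqP => E'; move: ij0; rewrite -E E' tw eqxx.
    by case: (v != u); case: (v \in D).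
  have : u \in part D i0 by rewrite inE uD tu eqxx.
  rewrite /d (cardsD1 u (part D i0)) => ->; lia.
have pj0 : #|part S j0| = d j0 + 1.
  have -> : part S j0 = w |: part D j0.
    apply/setP => v; rewrite !inE.
    have [E|vk] := eqVneq (tag v) j0; last first.
      have -> : (v == w) = false by apply/eqP => E'; move: vk; rewrite E' tw eqxx.
      by rewrite !andbF.
    have -> : (v != u) = true.
      by apply/eqP => E'; move: ij0; rewrite -tu -E' E eqxx.
    by case: (v == w); case: (v \in D).
  by rewrite cardsU1 inE (negbTE wD) /= /d addnC.
have ki0 := @key _ _ _ _ i0 (proj1 hg) i0I.
have pdS : pdom p S.
  move=> v vS; rewrite adj_card cardS.
  have [E|vj] := eqVneq (tag v) j0.
    rewrite E pj0; exact: ar1 ki0 hij0.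
  have [E|vi] := eqVneq (tag v) i0.
    rewrite E pi0; exact: ar2 ki0.
  rewrite pk //.
  have vD : v \notin D.
    move: vS; rewrite !inE negb_or => /andP [_]; apply: contra => vD.
    rewrite vD andbT; apply/eqP => E; move: vi; rewrite E tu eqxx //.
  by have := (proj1 hg) v vD; rewrite adj_card.
have gS : gamma_set p S.
  by split=> // S' /(proj2 hg); rewrite cardS.
have sub : I \subset IDset S.
  apply/subsetP => k kI; rewrite inE.
  have ki : k != i0 by apply/eqP => E; move: i0I; rewrite -E kI.
  have kj : k != j0 by apply/eqP => E; move: j0I; rewrite -E kI.
  by rewrite pk //; move: kI; rewrite inE.
have j0S : j0 \notin IDset S.
  apply/negP => j0S.
  have : #|j0 |: I| <= #|IDset S|.
    by apply: subset_leq_card; rewrite subUset sub1set j0S sub.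
  rewrite cardsU1 j0I /=; have := hmax S gS; rewrite -/I add1n => a b; move: (leq_trans b a); by rewrite ltnn.
have EJ : IDset S = I.
  apply/setP => k.
  have [->|ki] := eqVneq k i0.
    rewrite (negbTE i0I) inE pi0; apply/negP => /eqP E.
    exact: ar3 hij0 (@part_le _ _ D i0) E.
  have [->|kj] := eqVneq k j0; first by rewrite (negbTE j0I) (negbTE j0S).
  by rewrite !inE pk.
have := hmu S gS EJ; rewrite /mu EJ cardS -/I.
set m := (_ / _)%R.
have cN : \sum_(k | k \notin I) 1 = t - #|I|.
  rewrite (eq_bigl (fun k => k \in ~: I)); last by move=> k; rewrite !inE.
  rewrite sum1_card; apply: ar4; rewrite cardsC card_ord //.
have cD : #|D| = fsum n I + \sum_(k | k \notin I) d k.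
  rewrite card_sum (bigID (fun k => k \in I)) /=; congr (_ + _).
  by apply: eq_bigr => k; rewrite inE => /eqP.
have sup : \sum_(k | k \notin I) d k < (\sum_(k | k \notin I) 1) * d i0.
  rewrite big_distrl /= (bigD1 j0) //= [X in _ < X](bigD1 j0) //=.
  have : \sum_(k | (k \notin I) && (k != j0)) d k <=
         \sum_(k | (k \notin I) && (k != j0)) 1 * d i0.
    by apply: leq_sum => k /andP [kI _]; rewrite mul1n; apply: Hi0.
  move=> h; rewrite -addSn; apply: leq_add; [rewrite mul1n; exact: ar5 hij0 | exact: h].
have inf : (\sum_(k | k \notin I) 1) * d j0 < \sum_(k | k \notin I) d k.
  rewrite big_distrl /= (bigD1 i0) //= [X in _ < X](bigD1 i0) //=.
  have : \sum_(k | (k \notin I) && (k != i0)) 1 * d j0 <=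
         \sum_(k | (k \notin I) && (k != i0)) d k.
    by apply: leq_sum => k /andP [kI _]; rewrite mul1n; apply: Hj0.
  move=> h; rewrite -addSn; apply: leq_add; [rewrite mul1n; exact: ar5 hij0 | exact: h].
rewrite cN in sup inf.
have Npos : (0 < (t - #|I|)%:R :> rat)%R by rewrite ltr0n subn_gt0.
have mE : m = ((\sum_(k | k \notin I) d k)%:R / (t - #|I|)%:R)%R.
  by rewrite /m cD natrD addrC addKr.
have mlt : (m < (d i0)%:R)%R.
  by rewrite mE ltr_pdivrMr // -natrM ltr_nat mulnC.
have mgt : ((d j0)%:R < m)%R.
  by rewrite mE ltr_pdivlMr // -natrM ltr_nat mulnC.
rewrite (bigD1 i0) //= [X in (_ <= X)%R](bigD1 i0) //=.
rewrite (bigD1 j0) /=; last by rewrite j0I eq_sym.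
rewrite [X in (_ <= _ + X)%R](bigD1 j0) /=; last by rewrite j0I eq_sym.
rewrite pi0 pj0.
have -> : (\sum_(k | (k \notin I) && (k != i0) && (k != j0)) `|(#|part S k|)%:R - m|
    = \sum_(k | (k \notin I) && (k != i0) && (k != j0)) `|(#|part D k|)%:R - m|)%R.
  by apply: eq_bigr => k /andP [/andP [_ a] b]; rewrite pk.
have e1 : ((d i0 - 1)%:R = (d i0)%:R - 1 :> rat)%R.
  by rewrite natrB // (@ar6 _ _ hij0).
rewrite e1 natrD.
have h3 : ((d j0)%:R + 2 <= (d i0)%:R :> rat)%R.
  by rewrite -natrD ler_nat.
have h4 := @ineq _ _ _ h3 mgt mlt.
move=> H.
apply: (@fin _ _ (\sum_(k | (k \notin I) && (k != i0) && (k != j0)) `|(#|part D k|)%:R - m|)%R _ _ h4).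
exact: H.
Qed.


Theorem lemma4 (t : nat) (n : 'I_t -> nat) (p : nat)
  (ht : 2 <= t) (hn : forall i, 0 < n i) (hp : 0 < p)
  (hfp : p < fsum n [set: 'I_t])
  (D : {set vtx n}) (hD : optimal p D) :
  forall i j : 'I_t, i \notin IDset D -> j \notin IDset D ->
    (`| (#|part D i|)%:Z - (#|part D j|)%:Z | <= 1)%R.
Proof.
move=> i j iI jI.
have c1 : ~~ (#|part D j| + 2 <= #|part D i|).
  by apply/negP => h; exact: (main _ _ _ _ hD _ _ iI jI h).
have c2 : ~~ (#|part D i| + 2 <= #|part D j|).
  by apply/negP => h; exact: (main _ _ _ _ hD _ _ jI iI h).
move: c1 c2; move: (#|part D i|) (#|part D j|) => a b.
clear; lia.
Qed.
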